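(* Let $C$ be a totally bounded subset of a metric space $(X,d)$ with II-modulus of total boundedness $\gamma$, $T:C\to C$ nonexpansive with $\mathrm{Fix}(T)\ne\emptyset$, $x\in C$, $x_n:=T^nx$, and assume $(x_n)$ has approximate fixed points with $\Phi$ an approximate fixed point bound. Then for all $k\in\mathbb{N}$ and $g:\mathbb{N}\to\mathbb{N}$: (i) there exists $N\le\Sigma_0(\gamma(4k+3))$ with $d(x_i,x_j)\le\frac1{k+1}$ for all $i,j\in[N,N+g(N)]$, where $\Sigma_0(0)=0$, $\Sigma_0(n+1)=\Phi\big((4k+4)g^M(\Sigma_0(n))\big)$; (ii) there exists $N\le\tilde\Sigma_0(\gamma(8k+7))$ with $d(x_i,x_j)\le\frac1{k+1}$ and $d(x_i,Tx_i)\le\frac1{k+1}$ for all $i,j\in[N,N+g(N)]$, where $\tilde\Sigma_0(0)=0$, $\tilde\Sigma_0(n+1)=\Phi\big(\max\{2k+1,(8k+8)g^M(\tilde\Sigma_0(n))\}\big)$.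
   Context: II-modulus of total boundedness for $C$: $\gamma:\mathbb{N}\to\mathbb{N}$ such that for every $k$ and every sequence $(y_n)$ in $C$ there are $0\le i<j\le\gamma(k)$ with $d(y_i,y_j)\le\frac1{k+1}$. Nonexpansive: $d(Tx,Ty)\le d(x,y)$. An approximate fixed point bound for $(x_n)$ is a nondecreasing $\Phi:\mathbb{N}\to\mathbb{N}$ such that for every $k$ there is $N\le\Phi(k)$ with $d(x_N,Tx_N)\le\frac1{k+1}$. $g^M(n):=\max\{g(i)\mid i\le n\}$. *)

(* Defs.v *)
From Stdlib Require Import Reals Lia Arith.
Open Scope R_scope.

Definition is_metric {X : Type} (d : X -> X -> R) : Prop :=
  (forall x y, 0 <= d x y) /\
  (forall x y, d x y = 0 <-> x = y) /\
  (forall x y, d x y = d y x) /\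
  (forall x y z, d x z <= d x y + d y z).

Definition II_modulus {X : Type} (d : X -> X -> R) (C : X -> Prop)
  (gamma : nat -> nat) : Prop :=
  forall (k : nat) (y : nat -> X), (forall n, C (y n)) ->
    exists i j, (i < j)%nat /\ (j <= gamma k)%nat /\ d (y i) (y j) <= 1 / (INR k + 1).

Definition maps_into {X : Type} (C : X -> Prop) (T : X -> X) : Prop :=
  forall x, C x -> C (T x).
Definition nonexpansive_on {X : Type} (d : X -> X -> R) (C : X -> Prop) (T : X -> X) : Prop :=
  forall x y, C x -> C y -> d (T x) (T y) <= d x y.

Definition picard {X : Type} (T : X -> X) (x : X) (n : nat) : X := Nat.iter n T x.

Definition nondecreasing (f : nat -> nat) : Prop := forall m n, (m <= n)%nat -> (f m <= f n)%nat.
Definition afp_bound {X : Type} (d : X -> X -> R) (T : X -> X) (xs : nat -> X)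
  (Phi : nat -> nat) : Prop :=
  nondecreasing Phi /\
  forall k : nat, exists N, (N <= Phi k)%nat /\ d (xs N) (T (xs N)) <= 1 / (INR k + 1).

Fixpoint gM (g : nat -> nat) (n : nat) : nat :=
  match n with
  | O => g O
  | S m => Nat.max (gM g m) (g (S m))
  end.

Fixpoint Sigma0 (Phi : nat -> nat) (k : nat) (g : nat -> nat) (n : nat) : nat :=
  match n with
  | O => O
  | S m => Phi ((4 * k + 4) * gM g (Sigma0 Phi k g m))%nat
  end.

Fixpoint Sigma0t (Phi : nat -> nat) (k : nat) (g : nat -> nat) (n : nat) : nat :=
  match n with
  | O => O
  | S m => Phi (Nat.max (2 * k + 1) ((8 * k + 8) * gM g (Sigma0t Phi k g m)))%nat
  end.

(* Main.v *)
Require Import Defs.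
From Stdlib Require Import Reals Lia Arith Lra.
Open Scope R_scope.

Section Aux.
Variables (X : Type) (d : X -> X -> R) (C : X -> Prop) (T : X -> X) (x : X).
Hypothesis Hd : is_metric d.
Hypothesis HTC : maps_into C T.
Hypothesis HTne : nonexpansive_on d C T.
Hypothesis Hx : C x.

Let p := picard T x.

Lemma picS n : p (S n) = T (p n).
Proof. reflexivity. Qed.

Lemma picC n : C (p n).
Proof. induction n. exact Hx. rewrite picS. apply HTC; auto. Qed.

Lemma step_mono n m : (n <= m)%nat -> d (p m) (T (p m)) <= d (p n) (T (p n)).
Proof.
  induction 1. lra.
  eapply Rle_trans; [|exact IHle].
  rewrite picS. apply HTne. apply picC. apply HTC, picC.
Qed.

Lemma shift N M a : d (p (N + a)) (p (M + a)) <= d (p N) (p M).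
Proof.
  induction a. rewrite !Nat.add_0_r; lra.
  rewrite !Nat.add_succ_r, !picS. eapply Rle_trans; [|exact IHa].
  apply HTne; apply picC.
Qed.

Lemma chain M t : d (p M) (p (M + t)) <= INR t * d (p M) (T (p M)).
Proof.
  destruct Hd as [H0 [H1 [H2 H3]]].
  induction t.
  - rewrite Nat.add_0_r. simpl. assert (d (p M) (p M) = 0) by (apply H1; auto). lra.
  - rewrite Nat.add_succ_r, S_INR.
    eapply Rle_trans. apply (H3 _ (p (M + t))).
    rewrite picS. pose proof (step_mono M (M + t) ltac:(lia)). lra.
Qed.

Lemma core N M L delta eps :
  d (p N) (p M) <= delta -> d (p M) (T (p M)) <= eps ->
  forall a b, (a <= L)%nat -> (b <= L)%nat ->
  d (p (N + a)) (p (N + b)) <= 2 * delta + INR L * eps.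
Proof.
  destruct Hd as [H0 [H1 [H2 H3]]].
  intros HNM He.
  assert (key : forall a b, (a <= b <= L)%nat ->
     d (p (N + a)) (p (N + b)) <= 2 * delta + INR L * eps).
  { intros a b [Hab HbL].
    pose proof (shift N M a) as S1. pose proof (shift N M b) as S2.
    rewrite H2 in S2.
    pose proof (H3 (p (N + a)) (p (M + a)) (p (N + b))) as T1.
    pose proof (H3 (p (M + a)) (p (M + b)) (p (N + b))) as T2.
    pose proof (chain (M + a) (b - a)) as Ch.
    replace (M + a + (b - a))%nat with (M + b)%nat in Ch by lia.
    pose proof (step_mono M (M + a) ltac:(lia)).
    assert (INR (b - a) <= INR L) by (apply le_INR; lia).
    pose proof (pos_INR (b - a)).
    pose proof (H0 (p (M + a)) (T (p (M+a)))).
    assert (INR (b - a) * d (p (M + a)) (T (p (M + a))) <= INR L * eps).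
    { apply Rmult_le_compat; lra. }
    lra. }
  intros a b Ha Hb.
  destruct (Nat.le_ge_cases a b).
  - apply key; lia.
  - rewrite H2. apply key; lia.
Qed.

Lemma core2 N M delta eps :
  d (p N) (p M) <= delta -> d (p M) (T (p M)) <= eps ->
  forall a, d (p (N + a)) (T (p (N + a))) <= 2 * delta + eps.
Proof.
  destruct Hd as [H0 [H1 [H2 H3]]].
  intros HNM He a.
  pose proof (shift N M a) as S1. pose proof (shift N M (S a)) as S2.
  rewrite H2 in S2. rewrite !Nat.add_succ_r, !picS in S2.
  pose proof (H3 (p (N + a)) (p (M + a)) (T (p (N + a)))) as T1.
  pose proof (H3 (p (M + a)) (T (p (M + a))) (T (p (N + a)))) as T2.
  pose proof (step_mono M (M + a) ltac:(lia)).
  lra.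
Qed.

Lemma afp_after Phi : afp_bound d T p Phi ->
  forall m n, (Phi m <= n)%nat -> d (p n) (T (p n)) <= 1 / (INR m + 1).
Proof.
  intros [_ H] m n Hn. destruct (H m) as [N' [HN' Hd']].
  eapply Rle_trans; [|exact Hd']. apply step_mono. lia.
Qed.

End Aux.

Lemma gM_S g n : (gM g n <= gM g (S n))%nat.
Proof. simpl. lia. Qed.

Lemma gM_mono g n m : (n <= m)%nat -> (gM g n <= gM g m)%nat.
Proof. induction 1. lia. pose proof (gM_S g m). lia. Qed.

Lemma g_le_gM g n : (g n <= gM g n)%nat.
Proof. destruct n; simpl; lia. Qed.

Lemma Sigma0_mono Phi k g : nondecreasing Phi ->
  forall n m, (n <= m)%nat -> (Sigma0 Phi k g n <= Sigma0 Phi k g m)%nat.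
Proof.
  intros HP.
  assert (HS : forall n, (Sigma0 Phi k g n <= Sigma0 Phi k g (S n))%nat).
  { induction n. simpl. lia. simpl. apply HP.
    apply Nat.mul_le_mono_l. apply gM_mono. exact IHn. }
  induction 1. lia. pose proof (HS m). lia.
Qed.

Lemma Sigma0t_mono Phi k g : nondecreasing Phi ->
  forall n m, (n <= m)%nat -> (Sigma0t Phi k g n <= Sigma0t Phi k g m)%nat.
Proof.
  intros HP.
  assert (HS : forall n, (Sigma0t Phi k g n <= Sigma0t Phi k g (S n))%nat).
  { induction n. simpl. lia. simpl. apply HP.
    apply Nat.max_le_compat_l.
    apply Nat.mul_le_mono_l. apply gM_mono. exact IHn. }
  induction 1. lia. pose proof (HS m). lia.
Qed.

Lemma inv_bound e A : 0 < A -> e <= 1 / A -> e * A <= 1.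
Proof.
  intros HA He. apply Rmult_le_compat_r with (r := A) in He; [|lra].
  unfold Rdiv in He. rewrite Rmult_1_l, Rinv_l in He; lra.
Qed.

Lemma le_div a A : 0 < A -> a * A <= 1 -> a <= 1 / A.
Proof.
  intros HA H. unfold Rdiv. rewrite Rmult_1_l.
  apply Rmult_le_reg_r with A; auto. rewrite Rinv_l; lra.
Qed.

Theorem theorem7p7 (X : Type) (d : X -> X -> R) (C : X -> Prop)
  (gamma : nat -> nat) (T : X -> X) (x : X) (Phi : nat -> nat)
  (Hd : is_metric d)
  (Hgamma : II_modulus d C gamma)
  (HTC : maps_into C T)
  (HTne : nonexpansive_on d C T)
  (HFix : exists p, C p /\ T p = p)
  (Hx : C x)
  (HPhi : afp_bound d T (picard T x) Phi) :
  forall (k : nat) (g : nat -> nat),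
    (exists N, (N <= Sigma0 Phi k g (gamma (4 * k + 3)%nat))%nat /\
       forall i j, (N <= i <= N + g N)%nat -> (N <= j <= N + g N)%nat ->
         d (picard T x i) (picard T x j) <= 1 / (INR k + 1))
    /\
    (exists N, (N <= Sigma0t Phi k g (gamma (8 * k + 7)%nat))%nat /\
       forall i j, (N <= i <= N + g N)%nat -> (N <= j <= N + g N)%nat ->
         d (picard T x i) (picard T x j) <= 1 / (INR k + 1) /\
         d (picard T x i) (T (picard T x i)) <= 1 / (INR k + 1)).
Proof.
  intros k g.
  pose proof (pos_INR k) as Hk.
  assert (Hmet := Hd). destruct Hd as [H0 _].
  split.
  - destruct (Hgamma (4 * k + 3)%nat (fun n => picard T x (Sigma0 Phi k g n)))
      as [i [j [Hij [Hj Hdij]]]].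
    { intros n. apply (picC X C T x HTC Hx). }
    set (N := Sigma0 Phi k g i) in *. set (M := Sigma0 Phi k g j) in *.
    exists N. split.
    { apply Sigma0_mono. apply HPhi. lia. }
    set (G := gM g N).
    assert (HM : (Phi ((4 * k + 4) * G)%nat <= M)%nat).
    { change (Phi ((4 * k + 4) * G)%nat) with (Sigma0 Phi k g (S i)).
      apply Sigma0_mono. apply HPhi. lia. }
    pose proof (afp_after X d C T x HTC HTne Hx Phi HPhi _ _ HM) as He.
    intros a b Ha Hb.
    replace a with (N + (a - N))%nat by lia.
    replace b with (N + (b - N))%nat by lia.
    eapply Rle_trans.
    { apply (core X d C T x Hmet HTC HTne Hx N M (g N) _ _ (Rle_refl _) (Rle_refl _)); lia. }
    assert (E1 : INR (4 * k + 3) = 4 * INR k + 3) by (rewrite plus_INR, mult_INR; simpl; lra).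
    assert (E2 : INR ((4 * k + 4) * G) = (4 * INR k + 4) * INR G)
      by (rewrite mult_INR, plus_INR, mult_INR; simpl; lra).
    rewrite E1 in Hdij. rewrite E2 in He.
    pose proof (g_le_gM g N) as HgG. fold G in HgG.
    apply le_INR in HgG. pose proof (pos_INR (g N)). pose proof (pos_INR G).
    set (Gr := INR G) in *. set (Lr := INR (g N)) in *. set (K := INR k) in *.
    set (e := d (picard T x M) (T (picard T x M))) in *.
    set (dl := d (picard T x N) (picard T x M)) in *.
    assert (0 <= e) by apply H0.
    apply inv_bound in Hdij; [|lra]. apply inv_bound in He; [|nra].
    assert (Lr * e <= Gr * e) by (apply Rmult_le_compat_r; lra).
    apply le_div; [lra|].
    assert (A1 : (Gr * e) * (4 * K + 4) <= 1) by nra.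
    assert (A2 : (Lr * e) * (K + 1) <= (Gr * e) * (K + 1)) by (apply Rmult_le_compat_r; lra).
    assert (A3 : dl * (4 * K + 3 + 1) = 4 * (dl * (K + 1))) by ring.
    assert (A4 : (Gr * e) * (4 * K + 4) = 4 * ((Gr * e) * (K + 1))) by ring.
    replace ((2 * dl + Lr * e) * (K + 1)) with (2 * (dl * (K + 1)) + (Lr * e) * (K + 1)) by (unfold Lr; ring).
    lra.
  - destruct (Hgamma (8 * k + 7)%nat (fun n => picard T x (Sigma0t Phi k g n)))
      as [i [j [Hij [Hj Hdij]]]].
    { intros n. apply (picC X C T x HTC Hx). }
    set (N := Sigma0t Phi k g i) in *. set (M := Sigma0t Phi k g j) in *.
    exists N. split.
    { apply Sigma0t_mono. apply HPhi. lia. }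
    set (G := gM g N).
    set (m := Nat.max (2 * k + 1) ((8 * k + 8) * G)%nat).
    assert (HM : (Phi m <= M)%nat).
    { change (Phi m) with (Sigma0t Phi k g (S i)).
      apply Sigma0t_mono. apply HPhi. lia. }
    pose proof (afp_after X d C T x HTC HTne Hx Phi HPhi _ _ HM) as He.
    assert (Hm1 : (2 * k + 1 <= m)%nat) by lia.
    assert (Hm2 : ((8 * k + 8) * G <= m)%nat) by lia.
    apply le_INR in Hm1, Hm2.
    assert (E1 : INR (8 * k + 7) = 8 * INR k + 7) by (rewrite plus_INR, mult_INR; simpl; lra).
    assert (E2 : INR ((8 * k + 8) * G) = (8 * INR k + 8) * INR G)
      by (rewrite mult_INR, plus_INR, mult_INR; simpl; lra).
    assert (E3 : INR (2 * k + 1) = 2 * INR k + 1) by (rewrite plus_INR, mult_INR; simpl; lra).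
    rewrite E1 in Hdij. rewrite E2 in Hm2. rewrite E3 in Hm1.
    pose proof (g_le_gM g N) as HgG. fold G in HgG.
    apply le_INR in HgG. pose proof (pos_INR (g N)).
    pose proof (pos_INR G).
    set (e := d (picard T x M) (T (picard T x M))) in *.
    set (dl := d (picard T x N) (picard T x M)) in *.
    assert (0 <= e) by apply H0.
    set (Gr := INR G) in *. set (Lr := INR (g N)) in *. set (K := INR k) in *.
    set (mr := INR m) in *.
    pose proof Hdij as Hdl. apply inv_bound in Hdl; [|lra].
    apply inv_bound in He; [|lra].
    assert (Lr * e <= Gr * e) by (apply Rmult_le_compat_r; lra).
    assert (e * ((8*K+8) * Gr + 1) <= 1).
    { eapply Rle_trans; [|exact He]. apply Rmult_le_compat_l; lra. }
    assert (e * (2*K+2) <= 1).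
    { eapply Rle_trans; [|exact He]. apply Rmult_le_compat_l; lra. }
    intros a b Ha Hb. split.
    + replace a with (N + (a - N))%nat by lia.
      replace b with (N + (b - N))%nat by lia.
      eapply Rle_trans.
      { apply (core X d C T x Hmet HTC HTne Hx N M (g N) _ _ (Rle_refl dl) (Rle_refl _)); lia. }
      apply le_div; [lra|].
      assert (A1 : (Gr * e) * (8 * K + 8) <= 1) by nra.
      assert (A2 : (Lr * e) * (K + 1) <= (Gr * e) * (K + 1)) by (apply Rmult_le_compat_r; lra).
      assert (A3 : dl * (8 * K + 7 + 1) = 8 * (dl * (K + 1))) by ring.
      assert (A4 : (Gr * e) * (8 * K + 8) = 8 * ((Gr * e) * (K + 1))) by ring.
      change (INR (g N)) with Lr. change (d (picard T x M) (T (picard T x M))) with e.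
      replace ((2 * dl + Lr * e) * (K + 1)) with (2 * (dl * (K + 1)) + (Lr * e) * (K + 1)) by ring.
      lra.
    + replace a with (N + (a - N))%nat by lia.
      eapply Rle_trans.
      { apply (core2 X d C T x Hmet HTC HTne Hx N M _ _ (Rle_refl dl) (Rle_refl _)). }
      apply le_div; [lra|].
      assert (A3 : dl * (8 * K + 7 + 1) = 8 * (dl * (K + 1))) by ring.
      assert (A5 : e * (2 * K + 2) = 2 * (e * (K + 1))) by ring.
      change (INR (g N)) with Lr. change (d (picard T x M) (T (picard T x M))) with e.
      replace ((2 * dl + e) * (K + 1)) with (2 * (dl * (K + 1)) + e * (K + 1)) by ring.
      lra.
Qed.
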